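(* Let $\langle A, \leq, \otimes, \mathbf{1}\rangle$ be a partially ordered monoid and let $C'(A) = \{c \in A \mid \exists a,b \in A.\ a < b \wedge a \otimes c = b \otimes c\}$. Then $C'(A)$ is an ideal of $A$. If moreover $\otimes$ is monotone (i.e. $a \leq b$ implies $a \otimes c \leq b \otimes c$ for all $a,b,c\in A$), then $I'(A) = A \setminus C'(A)$ is a sub-monoid of $\langle A,\otimes,\mathbf{1}\rangle$ and $C'(A)$ is a prime ideal of $A$.
   Context: A partially ordered monoid $\langle A, \leq, \otimes, \mathbf{1}\rangle$ consists of a partial order $\langle A,\leq\rangle$ and a commutative monoid $\langle A, \otimes, \mathbf{1}\rangle$; $a<b$ means $a\leq b$ and $a\neq b$. A subset $J\subseteq A$ is an ideal if $a\otimes c\in J$ for all $a\in A$, $c\in J$; it is prime if moreover $a\otimes b\in J$ implies $a\in J$ or $b\in J$. A sub-monoid is a subset containing $\mathbf{1}$ and closed under $\otimes$. *)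

(* Defs.v *)
From mathcomp Require Import all_boot all_order.
Set Implicit Arguments. Unset Strict Implicit. Unset Printing Implicit Defensive.
Import Order.TTheory.
Local Open Scope order_scope.

(* No compatibility between order and op is
   assumed. *)

Definition Cp {d} {T : porderType d} {one : T} (op : Monoid.com_law one)
  : T -> Prop :=
  fun c => exists a b : T, a < b /\ op a c = op b c.

Definition Ip {d} {T : porderType d} {one : T} (op : Monoid.com_law one)
  : T -> Prop :=
  fun c => ~ Cp op c.

Definition is_ideal {T : Type} {one : T} (op : Monoid.com_law one)
  (J : T -> Prop) : Prop :=
  forall a c : T, J c -> J (op a c).

Definition is_prime_ideal {T : Type} {one : T} (op : Monoid.com_law one)
  (J : T -> Prop) : Prop :=
  is_ideal op J /\ (forall a b : T, J (op a b) -> J a \/ J b).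

Definition is_submonoid {T : Type} {one : T} (op : Monoid.com_law one)
  (S : T -> Prop) : Prop :=
  S one /\ (forall a b : T, S a -> S b -> S (op a b)).

Definition op_monotone {d} {T : porderType d} (op : T -> T -> T) : Prop :=
  forall a b c : T, a <= b -> op a c <= op b c.

(* Main.v *)
Require Import Defs.
From mathcomp Require Import all_boot all_order.
Import Order.TTheory.
Local Open Scope order_scope.

Theorem lemma6 (d : Order.disp_t) (T : porderType d) (one : T)
  (op : Monoid.com_law one) :
  is_ideal op (Cp op) /\
  (op_monotone op -> is_submonoid op (Ip op) /\ is_prime_ideal op (Cp op)).
Proof.
have ideal : is_ideal op (Cp op).
  move=> a c [x [y [lxy e]]]; exists x, y; split => //.
  rewrite (Monoid.mulmCA op x a c) (Monoid.mulmCA op y a c). exact: (congr1 (op a) e).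
have prime : op_monotone op -> forall a b : T, Cp op (op a b) -> Cp op a \/ Cp op b.
  move=> mono a b [x [y [lxy e]]].
  have le : op x a <= op y a by apply: mono; exact: ltW.
  case: (eqVneq (op x a) (op y a)) => [eq|ne].
    by left; exists x, y.
  right; exists (op x a), (op y a); split.
    by rewrite lt_neqAle ne le.
  by rewrite -!Monoid.mulmA.
split => // mono; split; last by split => //; exact: prime.
split.
  move=> [x [y [lxy e]]]; move: e; rewrite !Monoid.mulm1 => e.
  by move: lxy; rewrite e ltxx.
move=> a b Ha Hb Hab; case: (prime mono a b Hab); [exact: Ha|exact: Hb].
Qed.
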